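(* Let $\mathcal{B}$ be a real Banach space, $\mathcal{P}$ a cone over $\mathcal{B}$ with induced partial order $\preceq$, let $\mathcal{Q}$ be a real vector space and $d$ a quasi-cone metric on $\mathcal{Q}$ with values in $\mathcal{B}$. Let $H$ be a non-empty subset of $\mathcal{Q}$. Then $H$ is a backward pseudo Chebyshev subset of $\mathcal{Q}$ if and only if there do not exist $q\in\mathcal{Q}$, infinitely many linearly independent elements $\{h_n\}_{n\in\mathbb{N}}\subseteq H$, and a function $f:\mathcal{Q}\to\mathcal{B}$ such that for all $n\in\mathbb{N}$: $f(h_n)=d(h_n,q)$, $\{f(h)-f(h_n): h\in H\}\subseteq\mathcal{P}$, and $\{d(h,q)-f(h): h\in H\}\subseteq\mathcal{P}$.
   Context: A cone over a real Banach space $\mathcal{B}$ is a subset $\mathcal{P}\subseteq\mathcal{B}$ that is closed, $\mathcal{P}\neq\{0_\mathcal{B}\}$, satisfies $ax+by\in\mathcal{P}$ for all $x,y\in\mathcal{P}$ and $a,b\geq 0$, and such that $x\in\mathcal{P}$ and $-x\in\mathcal{P}$ imply $x=0_\mathcal{B}$. For $r,s\in\mathcal{B}$, $s\preceq r$ means $r-s\in\mathcal{P}$. A quasi-cone metric on a set $\mathcal{Q}$ is a map $d:\mathcal{Q}\times\mathcal{Q}\to\mathcal{B}$ such that for all $r,s,t\in\mathcal{Q}$: $d(r,s)\succeq 0_\mathcal{B}$; $d(r,s)=0_\mathcal{B}$ iff $r=s$; $d(r,t)\preceq d(r,s)+d(s,t)$. For non-empty $H\subseteq\mathcal{Q}$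 and $q\in\mathcal{Q}$, $\mathcal{P}_{H_b}(q)$ is the set of all $h_b\in H$ with $d(h_b,q)\preceq d(h,q)$ for all $h\in H$. A non-empty $H\subseteq\mathcal{Q}$ is a backward pseudo Chebyshev subset of $\mathcal{Q}$ if for every $q\in\mathcal{Q}$ the set $\mathcal{P}_{H_b}(q)$ does not contain infinitely many linearly independent elements. *)

(* Defs.v *)
From HB Require Import structures.
From mathcomp Require Import all_boot all_order all_algebra.
From mathcomp Require Import all_classical all_reals all_analysis.
Set Implicit Arguments. Unset Strict Implicit. Unset Printing Implicit Defensive.
Import Order.TTheory GRing.Theory Num.Theory.
Import numFieldNormedType.Exports.
Local Open Scope classical_set_scope.
Local Open Scope ring_scope.

Definition is_cone (R : realType) (B : completeNormedModType R) (P : set B) : Prop :=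
  [/\ closed P,
      P <> [set 0],
      (forall x y, P x -> P y -> forall a b : R, 0 <= a -> 0 <= b -> P (a *: x + b *: y))
    & (forall x, P x -> P (- x) -> x = 0)].

Definition cone_le (R : realType) (B : completeNormedModType R) (P : set B) (s r : B) : Prop :=
  P (r - s).

Definition is_quasi_cone_metric (R : realType) (B : completeNormedModType R) (P : set B)
  (Q : Type) (d : Q -> Q -> B) : Prop :=
  [/\ (forall r s, cone_le P 0 (d r s)),
      (forall r s, d r s = 0 <-> r = s)
    & (forall r s t, cone_le P (d r t) (d r s + d s t))].

Definition best_back_approx (R : realType) (B : completeNormedModType R) (P : set B)
  (Q : Type) (d : Q -> Q -> B) (H : set Q) (q : Q) : set Q :=
  [set hb | H hb /\ forall h, H h -> cone_le P (d hb q) (d h q)].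

(* A sequence of vectors is linearly independent: every finite initial
   family is free (hence every finite subfamily is free). *)
Definition lin_indep_seq (R : realType) (Q : lmodType R) (h : nat -> Q) : Prop :=
  forall (n : nat) (c : 'I_n -> R),
    \sum_(i < n) c i *: h i = 0 -> forall i, c i = 0.

Definition has_inf_lin_indep (R : realType) (Q : lmodType R) (S : set Q) : Prop :=
  exists h : nat -> Q, (forall n, S (h n)) /\ lin_indep_seq h.

Definition backward_pseudo_chebyshev (R : realType) (B : completeNormedModType R)
  (P : set B) (Q : lmodType R) (d : Q -> Q -> B) (H : set Q) : Prop :=
  H !=set0 /\ forall q : Q, ~ has_inf_lin_indep (best_back_approx P d H q).

(* Main.v *)
Require Import Defs.
From HB Require Import structures.
From mathcomp Require Import all_boot all_order all_algebra.
From mathcomp Require Import all_classical all_reals all_analysis.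
Import Order.TTheory GRing.Theory Num.Theory.
Import numFieldNormedType.Exports.
Local Open Scope classical_set_scope.
Local Open Scope ring_scope.

Theorem theorem8 (R : realType) (B : completeNormedModType R) (P : set B)
  (Q : lmodType R) (d : Q -> Q -> B) (H : set Q) :
  is_cone P -> is_quasi_cone_metric P d -> H !=set0 ->
  (backward_pseudo_chebyshev P d H <->
   ~ (exists (q : Q) (h : nat -> Q) (f : Q -> B),
        (forall n, H (h n)) /\ lin_indep_seq h /\
        (forall n, f (h n) = d (h n) q /\
                   (forall x, H x -> P (f x - f (h n))) /\
                   (forall x, H x -> P (d x q - f x))))).
Proof.
move=> [_ _ Padd _] [d0 dE _] Hne; split.
- move=> [_ Hch] [q [h [f [Hh [Hli Hf]]]]].
  apply: (Hch q); exists h; split => // n; split => // x Hx.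
  have [e1 [e2 e3]] := Hf n.
  have := Padd _ _ (e2 x Hx) (e3 x Hx) 1 1 ler01 ler01.
  rewrite /cone_le e1 !scale1r.
  by have -> : f x - d (h n) q + (d x q - f x) = d x q - d (h n) q
    by rewrite addrC addrA subrK.
- move=> Hn; split => // q [h [Hh Hli]].
  apply: Hn; exists q, h, (fun x => d x q); split; first by move=> n; case: (Hh n).
  split => // n; split => //; split; first by move=> x Hx; case: (Hh n) => _; apply.
  move=> x _; rewrite subrr.
  have := d0 (0:Q) 0; rewrite /cone_le.
  have -> : d 0 0 = 0 by apply (proj2 (dE 0 0)).
  by rewrite subr0.
Qed.
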